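(* Let $p$ be a prime with $p\notin\{2,3,7,43\}$ such that none of the numbers $1+2p,\ 1+6p,\ 1+14p,\ 1+42p,\ 1+86p,\ 1+258p,\ 1+602p,\ 1+1806p$ is prime. Then $\mathcal{M}_p\subseteq\{1,2,6,42,1806\}\cup p\cdot\{1,2,6,42,1806\}$; in particular $\mathcal{M}_p$ is finite.
   Context: For positive integers $k,n$ let $S_k(n)=\sum_{i=1}^{n} i^k$. For an integer $a$, $\mathcal{M}_a$ denotes the set of positive integers $n$ such that $S_n(n)\equiv a\pmod{n}$. For a set $A$ of integers and an integer $c$, $c\cdot A=\{ca : a\in A\}$. *)

(* Defs.v *)
From mathcomp Require Import all_boot.
Set Implicit Arguments. Unset Strict Implicit. Unset Printing Implicit Defensive.

Definition S (k n : nat) : nat := \sum_(1 <= i < n.+1) i ^ k.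

Definition inM (a n : nat) : Prop := 0 < n /\ S n n = a %[mod n].

Definition baseSet : seq nat := [:: 1; 2; 6; 42; 1806].

(* Main.v *)
Require Import Defs.
From mathcomp Require Import all_boot all_algebra all_solvable all_field.
Import GRing.Theory.
Import GRing.Theory.

Lemma exists_g q n : prime q -> ~~ (q.-1 %| n) ->
  exists g, coprime q g /\ g ^ n %% q != 1.
Proof.
move=> pq ndv.
have q1 : 1 < q by exact: prime_gt1.
pose rs := enum [pred x : 'F_q | x != 0%R].
have : has (q.-1).-primitive_root%R rs.
  apply: has_prim_root.
  - by rewrite -ltnS prednK // ltnW.
  - apply/allP => x; rewrite mem_enum inE => nz.
    rewrite unity_rootE; apply/eqP.
    have h : (x ^+ (q.-1).+1)%R = x.
      by rewrite prednK ?(ltnW q1) //; have := expf_card x; rewrite card_Fp.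
    move: h; rewrite exprS => h; apply: (mulfI nz); by rewrite h mulr1.
  - exact: enum_uniq.
  - rewrite -cardE.
    have := cardC1 (0%R : 'F_q); rewrite card_Fp // => <-.
    by apply: eq_leq; apply: eq_card => x; rewrite !inE.
case/hasP => w; rewrite mem_enum inE => wnz pw.
exists (val w); split.
  rewrite prime_coprime //; apply/negP => qd.
  have wq : val w < q by apply: leq_trans (ltn_ord w) _; rewrite Fp_cast.
  suff e : w = 0%R by move: wnz; rewrite e eqxx.
  apply: val_inj => /=; apply/eqP; rewrite -(modn_small wq); exact: qd.
apply/negP => /eqP h.
move: ndv; rewrite (prim_order_dvd pw).
have : (((val w) ^ n)%:R : 'F_q)%R = 1%R.
  by rewrite -Fp_nat_mod // h.
rewrite natrX natr_Zp => ->; by rewrite eqxx.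
Qed.
Definition T k N := \sum_(0 <= i < N) i ^ k.

Lemma S_T k n : 0 < k -> S k n = T k n + n ^ k.
Proof.
move=> k0; rewrite /S /T -big_nat_recr //=.
by rewrite [in RHS]big_ltn // exp0n // add0n.
Qed.

Lemma T_period k M c : T k (c * M) = c * T k M %[mod M].
Proof.
elim: c => [|c IH]; first by rewrite /T mul0n big_geq.
rewrite mulSn addnC /T (big_cat_nat _ (leq_addr _ _)) //=.
rewrite -modnDm -/(T k (c * M)) IH modnDm.
have E : \sum_(c * M <= i < c * M + M) i ^ k = T k M %[mod M].
  rewrite -[X in \sum_(X <= i < _) _]add0n big_addn addKn /T.
  rewrite -[LHS]modn_summ -[RHS]modn_summ; congr (_ %% M); apply: eq_bigr => i _.
  by rewrite -modnXm addnC modnMDl modnXm.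
by rewrite -modnDmr E modnDmr mulSn addnC.
Qed.

Lemma S_mod n M : 0 < n -> M %| n -> S n n = (n %/ M) * T n M %[mod M].
Proof.
move=> n0 Mn; rewrite S_T // -modnDmr.
have -> : n ^ n %% M = 0.
  by apply/eqP; rewrite -/(dvdn _ _); apply: dvdn_exp.
by rewrite addn0 -[X in T _ X](divnK Mn) T_period.
Qed.

Lemma T_zero q k n g : prime q -> coprime q g -> g ^ n %% q != 1 ->
  T n (q ^ k) %% q ^ k = 0.
Proof.
move=> pq cg gn.
have q1 := prime_gt1 pq.
set M := q ^ k.
have M0 : 0 < M by rewrite expn_gt0 ltnW.
have cMg : coprime M g by rewrite coprimeXl.
have g0 : 0 < g.
  case: g cg {cMg gn} => // ; rewrite /coprime gcdn0 => /eqP q1'.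
  by move: q1; rewrite q1'.
have key : T n M = g ^ n * T n M %[mod M].
  rewrite /T big_mkord.
  pose h (i : 'I_M) := Ordinal (ltn_pmod (g * i) M0).
  have hinj : injective h.
    have aux (i j : 'I_M) : i <= j -> h i = h j -> i = j.
      move=> le /(congr1 val) /= /eqP e.
      have : M %| j - i.
        rewrite -(Gauss_dvdr _ cMg) mulnBr -eqn_mod_dvd ?leq_mul2l ?le ?orbT //.
        by rewrite eq_sym.
      move/eqP; rewrite modn_small; last by rewrite (leq_ltn_trans (leq_subr _ _)).
      move/eqP; rewrite subn_eq0 => ji; apply: val_inj; apply/eqP.
      by rewrite eqn_leq le ji.
    move=> i j; case: (leqP i j) => [le|/ltnW le]; first exact: aux.
    by move/esym/(aux _ _ le)->.
  rewrite [in LHS](reindex_inj hinj) /= big_distrr /=.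
  rewrite -[LHS]modn_summ -[RHS]modn_summ; congr (_ %% M).
  by apply: eq_bigr => i _; rewrite modnXm expnMn.
have gn1 : 1 <= g ^ n by rewrite expn_gt0 g0.
have : M %| (g ^ n - 1) * T n M.
  by rewrite mulnBl mul1n -eqn_mod_dvd ?leq_pmull // eq_sym; apply/eqP.
rewrite Gauss_dvdr; first by move/eqP.
rewrite coprimeXl // prime_coprime //; apply/negP => d.
move: gn; rewrite -(eqn_mod_dvd _ gn1) in d.
by rewrite (eqP d) modn_small.
Qed.

Definition L := [:: 2; 3; 7; 43].

Lemma sqf1806 x : 0 < x ->
  (forall s, prime s -> s %| x -> s \in L /\ ~~ (s ^ 2 %| x)) -> x %| 1806.
Proof.
move=> x0 H; apply/(dvdn_partP _ x0) => s; rewrite mem_primes => /and3P[ps _ sx].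
have [sL sq] := H s ps sx.
rewrite p_part.
have -> : logn s x = 1.
  apply/eqP; rewrite eqn_leq -(pfactor_dvdn _ _ x0) ?expn1 // sx andbT.
  by rewrite leqNgt -(pfactor_dvdn _ _ x0).
rewrite expn1; move: s sL {H ps sx sq}; apply/allP; by [].
Qed.

Lemma div1806_prime d : d %| 1806 -> prime d.+1 -> d.+1 \in L.
Proof.
move=> dd.
have H : all (fun d => prime d.+1 ==> (d.+1 \in L)) (divisors 1806).
  by vm_compute.
have dd' : d \in divisors 1806 by rewrite -dvdn_divisors.
by move/allP/(_ d dd')/implyP: H.
Qed.

Definition evens := [:: 2; 6; 14; 42; 86; 258; 602; 1806].

Lemma b1 p d : odd p -> 2 < p ->
  (forall e, e \in evens -> ~~ prime (1 + e * p)) -> d %| 1806 ->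
  ~~ prime (p * d).+1.
Proof.
move=> op p2 H dd.
have A : all (fun d => odd d || (d \in evens)) (divisors 1806) by vm_compute.
have dd' : d \in divisors 1806 by rewrite -dvdn_divisors.
case/orP: (allP A d dd') => [od|de]; last by rewrite mulnC -add1n; apply: H.
apply/negP => pr; case: (even_prime pr) => [[]|].
  move/eqP; rewrite muln_eq1 => /andP[/eqP p1 _]; by move: p2; rewrite p1.
by rewrite /= oddM op od.
Qed.

Lemma base_char m : m %| 1806 -> (forall q, prime q -> q %| m -> q.-1 %| m) ->
  m \in baseSet.
Proof.
move=> md H.
have H0 : all (fun d => all (fun q => q.-1 %| d) (primes d) ==> (d \in baseSet))
   (divisors 1806) by vm_compute.
have md' : m \in divisors 1806 by rewrite -dvdn_divisors.
move/allP/(_ m md')/implyP: H0; apply; apply/allP => q.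
rewrite mem_primes => /and3P[pq _ qm]; exact: H.
Qed.

Lemma pL p q : q \in L -> prime p -> p %| q.-1 -> p \in L.
Proof.
move=> qL pp d.
have H0 : all (fun q => (0 < q.-1) && all (fun s => s \in L) (primes q.-1)) L
  by vm_compute.
move/allP/(_ q qL)/andP: H0 => [q0 /allP]; apply.
by rewrite mem_primes pp q0.
Qed.

Theorem mainTheorem12 (p : nat) :
  prime p -> p \notin [:: 2; 3; 7; 43] ->
  ~~ prime (1 + 2 * p) -> ~~ prime (1 + 6 * p) -> ~~ prime (1 + 14 * p) ->
  ~~ prime (1 + 42 * p) -> ~~ prime (1 + 86 * p) -> ~~ prime (1 + 258 * p) ->
  ~~ prime (1 + 602 * p) -> ~~ prime (1 + 1806 * p) ->
  forall n : nat, inM p n ->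
    (n \in baseSet) || (n \in [seq p * c | c <- baseSet]).
Proof.
move=> pp pL' h1 h2 h3 h4 h5 h6 h7 h8 n [n0 HS].
have p1 := prime_gt1 pp.
have pnL : ~ (p \in L) by apply/negP.
have p2 : 2 < p.
  rewrite ltn_neqAle p1 andbT eq_sym; apply/negP => /eqP e; apply: pnL.
  by rewrite e.
have op : odd p.
  by case: (even_prime pp) => // e; move: p2; rewrite e.
have Hev : forall e, e \in evens -> ~~ prime (1 + e * p).
  move=> e; rewrite /evens !inE.
  do !(case/orP; first by move/eqP->).
  by move/eqP->.
have HM : forall M, M %| n -> S n n %% M = p %% M.
  by move=> M d; rewrite -(modn_dvdm _ d) HS modn_dvdm.
have L1 : forall q k, prime q -> q ^ k %| n -> ~~ (q.-1 %| n) ->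
    S n n %% q ^ k = 0.
  move=> q k pq d nd; have [g [cg gn]] := @exists_g q n pq nd.
  by rewrite (@S_mod n _ n0 d) -modnMmr (@T_zero q k n g pq cg gn) muln0 mod0n.
have L2 : forall q, prime q -> q ^ 2 %| n -> S n n %% q = 0.
  move=> q pq d.
  have qn : q %| n by apply: dvdn_trans d; rewrite dvdn_exp.
  have e : q %| n %/ q by rewrite dvdn_divRL.
  by rewrite (@S_mod n _ n0 qn) -modnMml (eqP e) mul0n mod0n.
have F1a : forall q, prime q -> q %| n -> q != p -> q.-1 %| n.
  move=> q pq qn qp; apply/negPn/negP => nd.
  have qn1 : q ^ 1 %| n by rewrite expn1.
  have := L1 q 1 pq qn1 nd; rewrite expn1 HM // => e.
  have : q %| p by rewrite /dvdn e.
  by rewrite dvdn_prime2 // (negbTE qp).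
have F1b : forall q, prime q -> q != p -> ~~ (q ^ 2 %| n).
  move=> q pq qp; apply/negP => d.
  have := L2 q pq d; rewrite HM; last by apply: dvdn_trans d; rewrite dvdn_exp.
  move=> e; have : q %| p by rewrite /dvdn e.
  by rewrite dvdn_prime2 // (negbTE qp).
have F2 : p ^ 2 %| n -> p.-1 %| n.
  move=> d; apply/negPn/negP => nd.
  have := L1 p 2 pp d nd; rewrite HM // modn_small.
    by move=> e; move: p1; rewrite e.
  by rewrite -[X in X < _]expn1 ltn_exp2l.
have p10 : 0 < p.-1 by rewrite -ltnS prednK // ltnW.
have IHp : forall r, (forall s, prime s -> s %| n -> s != p -> s < r -> s \in L) ->
    p < r -> ~~ (p.-1 %| n).
  move=> r IH pr; apply/negP => d.
  have : p.-1 %| 1806.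
    apply: sqf1806 => // s ps sd.
    have sp : s < p.
      by apply: leq_ltn_trans (dvdn_leq p10 sd) _; rewrite ltn_predL ltnW.
    have sp' : s != p by rewrite neq_ltn sp.
    split.
      apply: IH => //; [exact: dvdn_trans sd d | exact: ltn_trans sp pr].
    by apply/negP => sq; move: (F1b s ps sp'); rewrite (dvdn_trans sq d).
  by move/div1806_prime; rewrite prednK ?(ltnW p1) // => /(_ pp).
have Step3 : forall r, prime r -> r %| n -> r != p -> r \in L.
  elim/ltn_ind => r IH pr rn rp.
  have r1 := prime_gt1 pr.
  have xn := F1a r pr rn rp.
  set x := r.-1 in xn.
  have x0 : 0 < x by rewrite /x -ltnS prednK // ltnW.
  have xr : x < r by rewrite /x ltn_predL ltnW.
  set d := x`_p^'.
  have dx : d %| x := dvdn_part _ _.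
  have dL : d %| 1806.
    apply: sqf1806 => [|s ps sd]; first exact: part_gt0.
    have sp : s != p.
      have : p^'.-nat s by apply: pnat_dvd sd (part_pnat _ _).
      by rewrite pnatE // inE.
    have sx : s %| x := dvdn_trans sd dx.
    split.
      apply: IH => //; last exact: dvdn_trans sx xn.
      exact: leq_ltn_trans (dvdn_leq x0 sx) xr.
    apply/negP => sq; move: (F1b s ps sp).
    by rewrite (dvdn_trans sq (dvdn_trans dx xn)).
  have xe : x = p ^ logn p x * d by rewrite -p_part partnC.
  have rx : r = x.+1 by rewrite /x prednK // ltnW.
  case: (ltngtP (logn p x) 1) => [b0|b2|bb1].
  - move: b0; rewrite ltnS leqn0 => /eqP b0.
    have re : r = d.+1 by rewrite rx xe b0 expn0 mul1n.
    by rewrite re; apply: div1806_prime => //; rewrite -re.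
  - have px : p ^ 2 %| x by rewrite pfactor_dvdn.
    have pr' : p < r.
      apply: leq_ltn_trans _ xr; apply: leq_trans (dvdn_leq x0 px).
      by rewrite -[X in X <= _]expn1 leq_exp2l // ltnW.
    have := IHp r (fun s ps sn sp sr => IH s sr ps sn sp) pr'.
    by rewrite F2 // (dvdn_trans px xn).
  - move: pr; rewrite rx xe bb1 expn1.
    by move/negP: (b1 p d op p2 Hev dL).
set m := n`_p^'.
have mn : m %| n := dvdn_part _ _.
have notp : forall s, prime s -> s %| m -> s != p.
  move=> s ps sd.
  have : p^'.-nat s by apply: pnat_dvd sd (part_pnat _ _).
  by rewrite pnatE // inE.
have m1806 : m %| 1806.
  apply: sqf1806 => [|s ps sd]; first exact: part_gt0.
  have sp := notp s ps sd.
  split; first by apply: Step3 => //; exact: dvdn_trans sd mn.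
  apply/negP => sq; move: (F1b s ps sp).
  by rewrite (dvdn_trans sq mn).
have mbase : m \in baseSet.
  apply: base_char => // q pq qm.
  have qp := notp q pq qm.
  have qn := dvdn_trans qm mn.
  have qL := Step3 q pq qn qp.
  have q1n := F1a q pq qn qp.
  have cq : coprime (q.-1) (n`_p).
    rewrite p_part coprimeXr // coprime_sym prime_coprime //.
    by apply/negP => /(@pL p q qL pp).
  by rewrite -(Gauss_dvdr _ cq) partnC.
have a1 : logn p n <= 1.
  rewrite leqNgt; apply/negP => a2.
  have d2 : p ^ 2 %| n by rewrite pfactor_dvdn.
  have pn := F2 d2.
  move: (IHp p.+1 (fun s ps sn sp _ => Step3 s ps sn sp) (ltnSn p)).
  by rewrite pn.
have ne : n = p ^ logn p n * m by rewrite -p_part partnC.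
move: a1; rewrite leq_eqVlt ltnS leqn0 => /orP[/eqP a|/eqP a]; rewrite ne a.
  by rewrite expn1; apply/orP; right; apply: map_f.
by rewrite expn0 mul1n mbase.
Qed.
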